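(* Let $\Pi_n=\{\pi_1,\ldots,\pi_n\}$ be a finite set of policies of a discrete mean-field game (setting in the context) and suppose $J$ is $\mu$-diff-affine. Let $M\in\mathbb R^{n\times n}$ with $M_{ij}=J(\pi_i,\mu^{\pi_j})$ and consider the symmetric two-player normal-form game where player 1 has payoff matrix $M$ and player 2 has payoff matrix $M^\top$. If $\nu\in\Delta(\{1,\ldots,n\})$ is a symmetric Nash equilibrium of this game (i.e. $e_k^\top M\nu\le\nu^\top M\nu$ for all $k$), then, viewing $\nu$ as a distribution over $\Pi_n$, $\nu$ is a Nash equilibrium of the restricted mean-field game: $J(\pi_k,\mu(\nu))-J(\pi(\nu),\mu(\nu))\le0$ for all $k=1,\ldots,n$.
   Context: A discrete mean-field game consists of finite state set $\mathcal X$, finite action set $\mathcal A$, reward $r:\mathcal X\times\mathcal A\times\Delta(\mathcal X)\to\mathbb R$, transitions $p(x'\mid x,a)$ independent of the population distribution, initial distribution $\mu_0$. A policy is $\pi:\mathcal X\to\Delta(\mathcal A)$; $\mu^\pi$ is its state occupancy measure (discounted or finite-horizon); $J(\pi,\mu)=\sum_{x,a}\mu^\pi(x)\pi(x,a)r(x,a,\mu)$. For $\nu\in\Delta(\Pi_n)$, $\mu(\nu)=\sum_j\nu(\pi_j)\mu^{\pi_j}$ and $J(\pi(\nu),\mu)=\sum_i\nu(\pi_i)J(\pi_i,\mu)$, where $\pi(\nu)$ samples a policy from $\nu$ at the start and plays it. $J$ is $\mu$-diff-affine if for all policies $\pi,\pi'$ the map $\mu\mapsto J(\pi,\mu)-J(\pi',\mu)$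 is affine. *)

(* Defs.v *)
From HB Require Import structures.
From mathcomp Require Import all_boot all_order all_algebra.
Set Implicit Arguments. Unset Strict Implicit. Unset Printing Implicit Defensive.
Import Order.TTheory GRing.Theory Num.Theory.
Local Open Scope ring_scope.

Section MFG.
Variable R : realFieldType.

Definition is_dist (T : finType) (d : {ffun T -> R}) : Prop :=
  (forall t, 0 <= d t) /\ \sum_t d t = 1.

Variables (X A : finType).

(* transitions p(x'|x,a) = p x a x' *)
Definition is_kernel (p : X -> A -> {ffun X -> R}) : Prop :=
  forall x a, is_dist (p x a).

Definition policy := {ffun X -> {ffun A -> R}}.
Definition is_policy (pi : policy) : Prop := forall x, is_dist (pi x).

Definition Pmat (p : X -> A -> {ffun X -> R}) (pi : policy) : 'M[R]_#|X| :=
  \matrix_(i, j) \sum_a pi (enum_val i) a * p (enum_val i) a (enum_val j).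

Definition row_of (d : {ffun X -> R}) : 'rV[R]_#|X| := \row_j d (enum_val j).
Definition fun_of_row (v : 'rV[R]_#|X|) : {ffun X -> R} :=
  [ffun x => v 0 (enum_rank x)].

Inductive occ_model := Discounted of R | FiniteHorizon of nat.

Definition valid_occ_model (m : occ_model) : Prop :=
  match m with
  | Discounted g => 0 <= g < 1
  | FiniteHorizon H => (0 < H)%N
  end.

(* state occupancy measure mu^pi:
   discounted:     (1-g) sum_t g^t mu0 P^t = (1-g) mu0 (I - g P)^{-1}
   finite horizon: (1/H) sum_{t<H} mu0 P^t *)
Definition occupancy (m : occ_model) (p : X -> A -> {ffun X -> R})
    (mu0 : {ffun X -> R}) (pi : policy) : {ffun X -> R} :=
  match m with
  | Discounted g =>
      fun_of_row ((1 - g) *: (row_of mu0 *m invmx (1%:M - g *: Pmat p pi)))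
  | FiniteHorizon H =>
      fun_of_row (H%:R^-1 *: \sum_(t < H) (row_of mu0 *m (Pmat p pi) ^+ t))
  end.

Definition Jv (m : occ_model) (p : X -> A -> {ffun X -> R}) (mu0 : {ffun X -> R})
    (r : X -> A -> {ffun X -> R} -> R) (pi : policy) (mu : {ffun X -> R}) : R :=
  \sum_x \sum_a occupancy m p mu0 pi x * pi x a * r x a mu.

Definition affine_on_simplex (f : {ffun X -> R} -> R) : Prop :=
  forall mu1 mu2 : {ffun X -> R}, is_dist mu1 -> is_dist mu2 ->
  forall t : R, 0 <= t <= 1 ->
    f [ffun x => t * mu1 x + (1 - t) * mu2 x] = t * f mu1 + (1 - t) * f mu2.

Definition mu_diff_affine (J : policy -> {ffun X -> R} -> R) : Prop :=
  forall pi pi' : policy, is_policy pi -> is_policy pi' ->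
    affine_on_simplex (fun mu => J pi mu - J pi' mu).

End MFG.

(* Main.v *)
Require Import Defs.
From HB Require Import structures.
From mathcomp Require Import all_boot all_order all_algebra.
From mathcomp Require Import ring lra.
Import Order.TTheory GRing.Theory Num.Theory.
Local Open Scope ring_scope.
Set Implicit Arguments. Unset Strict Implicit.

Section Stoch.
Variable R : realFieldType.
Variable N : nat.

Definition stoch (P : 'M[R]_N) := (forall i j, 0 <= P i j) /\ (forall i, \sum_j P i j = 1).

Lemma nonneg_fix (P : 'M[R]_N) (hP : stoch P) (g : R) (hg : 0 <= g < 1)
  (w c : 'rV[R]_N) (hc : forall j, 0 <= c 0 j) (hw : w = c + g *: (w *m P)) :
  forall j, 0 <= w 0 j.
Proof.
case: hP => P0 P1; case/andP: hg => g0 g1.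
have key : forall j, w 0 j = c 0 j + g * \sum_i w 0 i * P i j.
  by move=> j; rewrite {1}hw !mxE.
set S := \sum_(j | w 0 j < 0) w 0 j.
have H1 : g * \sum_(j | w 0 j < 0) \sum_i w 0 i * P i j <= S.
  rewrite mulr_sumr; apply: ler_sum => j _; by rewrite key lerDr hc.
rewrite exchange_big /= in H1.
have H2 : S <= \sum_i w 0 i * \sum_(j | w 0 j < 0) P i j.
  rewrite /S big_mkcond /=; apply: ler_sum => i _.
  have s0 : 0 <= \sum_(j | w 0 j < 0) P i j by apply: sumr_ge0.
  have s1 : \sum_(j | w 0 j < 0) P i j <= 1.
    rewrite -(P1 i) [X in _ <= X](bigID (fun j => w 0 j < 0)) /= lerDl.
    by apply: sumr_ge0.
  case: ifP => hi.
    by nra.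
  move/negbT: hi; rewrite -leNgt => hi; exact: mulr_ge0.
have H3 : g * S <= S.
  apply: le_trans H1; apply: ler_wpM2l => //.
  apply: le_trans H2 _; rewrite le_eqVlt; apply/orP; left; apply/eqP.
  by apply: eq_bigr => i _; rewrite mulr_sumr.
have S0 : 0 <= S by nra.
move=> j; rewrite leNgt; apply/negP => hj.
have : S <= w 0 j.
  rewrite /S (bigD1 j) //= gerDl; apply: sumr_le0 => i /andP[hi _]; exact: ltW.
lra.
Qed.

Lemma sum_fix (P : 'M[R]_N) (hP : stoch P) (g : R)
  (w c : 'rV[R]_N) (hw : w = c + g *: (w *m P)) :
  (1 - g) * \sum_j w 0 j = \sum_j c 0 j.
Proof.
case: hP => P0 P1.
have : \sum_j w 0 j = \sum_j c 0 j + g * \sum_j w 0 j.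
  rewrite {1}hw; under eq_bigr do rewrite !mxE.
  rewrite big_split /= -mulr_sumr; congr (_ + g * _).
  rewrite exchange_big /=; apply: eq_bigr => i _.
  by rewrite -mulr_sumr P1 mulr1.
by move=> h; rewrite mulrBl mul1r {1}h addrK.
Qed.

Lemma unit_fix (P : 'M[R]_N) (hP : stoch P) (g : R) (hg : 0 <= g < 1) :
  (1%:M - g *: P) \in unitmx.
Proof.
rewrite -row_free_unit -kermx_eq0.
set K := kermx _.
have HK := mulmx_ker (1%:M - g *: P); rewrite -/K in HK.
suff inj : forall v : 'rV_N, v *m (1%:M - g *: P) = 0 -> v = 0.
  apply/eqP/row_matrixP => i; rewrite row0; apply: inj.
  by rewrite -row_mul HK row0.
move=> v hv.
have e1 : v = 0 + g *: (v *m P).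
  by move: hv; rewrite mulmxBr mulmx1 -scalemxAr add0r => /eqP; rewrite subr_eq0 => /eqP.
have e2 : - v = 0 + g *: (- v *m P).
  by rewrite mulNmx scalerN add0r {1}e1 add0r.
have h1 := @nonneg_fix P hP g hg v 0 (fun j => ltac:(by rewrite mxE)) e1.
have h2 := @nonneg_fix P hP g hg (-v) 0 (fun j => ltac:(by rewrite mxE)) e2.
apply/matrixP => a b; rewrite ord1 [RHS]mxE; apply/eqP; rewrite eq_le h1 andbT.
by move: (h2 b); rewrite mxE oppr_ge0.
Qed.

Lemma dist_mul (P : 'M[R]_N) (hP : stoch P) (v : 'rV[R]_N) :
  (forall j, 0 <= v 0 j) -> \sum_j v 0 j = 1 ->
  (forall j, 0 <= (v *m P) 0 j) /\ \sum_j (v *m P) 0 j = 1.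
Proof.
case: hP => P0 P1 v0 v1; split.
  move=> j; rewrite mxE; apply: sumr_ge0 => i _; exact: mulr_ge0.
under eq_bigr do rewrite mxE.
rewrite exchange_big /= -v1; apply: eq_bigr => i _.
by rewrite -mulr_sumr P1 mulr1.
Qed.
End Stoch.

Section Occ.
Variables (R : realFieldType) (X A : finType).

Lemma sum_enum (F : X -> R) : \sum_(j : 'I_#|X|) F (enum_val j) = \sum_x F x.
Proof. by rewrite [RHS](reindex (@enum_val X (pred_of_simpl predT))) //; apply: onW_bij; exact: enum_val_bij. Qed.

Lemma sum_row (v : 'rV[R]_#|X|) : \sum_x fun_of_row v x = \sum_j v 0 j.
Proof.
rewrite -sum_enum; apply: eq_bigr => j _; by rewrite ffunE enum_valK.
Qed.

Lemma Pmat_stoch (p : X -> A -> {ffun X -> R}) (pi : policy R X A) :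
  is_kernel p -> is_policy pi -> stoch (Pmat p pi).
Proof.
move=> Hp Hpi; split.
  move=> i j; rewrite mxE; apply: sumr_ge0 => a _; apply: mulr_ge0.
    by case: (Hpi (enum_val i)).
  by case: (Hp (enum_val i) a).
move=> i; under eq_bigr do rewrite mxE.
rewrite exchange_big /=.
have [_ <-] := Hpi (enum_val i).
apply: eq_bigr => a _; rewrite -mulr_sumr sum_enum.
by have [_ ->] := Hp (enum_val i) a; rewrite mulr1.
Qed.

Lemma occ_dist (m : occ_model R) (p : X -> A -> {ffun X -> R})
  (mu0 : {ffun X -> R}) (pi : policy R X A) :
  is_kernel p -> is_dist mu0 -> valid_occ_model m -> is_policy pi ->
  is_dist (occupancy m p mu0 pi).
Proof.
move=> Hp [m0 m1] Hm Hpi.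
have hP := Pmat_stoch Hp Hpi.
have r0 : forall j, 0 <= (row_of mu0) 0 j by move=> j; rewrite /row_of mxE.
have r1 : \sum_j (row_of mu0) 0 j = 1.
  by rewrite -m1 -sum_enum; apply: eq_bigr => j _; rewrite /row_of mxE.
case: m Hm => [g|H] /= Hm.
  have hU := unit_fix hP Hm.
  set B := (1%:M - g *: Pmat p pi) in hU *.
  set w := row_of mu0 *m invmx B.
  have hw : w = row_of mu0 + g *: (w *m Pmat p pi).
    have := mulmxKV hU (row_of mu0); rewrite -/w /B mulmxBr mulmx1 -scalemxAr.
    by move=> <-; rewrite subrK.
  have w0 := nonneg_fix hP Hm r0 hw.
  have w1 := sum_fix hP hw.
  case/andP: Hm => g0 g1.
  split.
    move=> x; rewrite ffunE mxE; apply: mulr_ge0 => //; lra.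
  rewrite sum_row; under eq_bigr do rewrite mxE.
  by rewrite -mulr_sumr w1 r1.
have hd : forall t, (forall j, 0 <= (row_of mu0 *m Pmat p pi ^+ t) 0 j) /\
                    \sum_j (row_of mu0 *m Pmat p pi ^+ t) 0 j = 1.
  elim=> [|t [IH1 IH2]].
    by rewrite expr0 mulmx1.
  by rewrite exprSr -mulmxE mulmxA; apply: dist_mul.
split.
  move=> x; rewrite ffunE mxE summxE; apply: mulr_ge0.
    by rewrite invr_ge0 ler0n.
  by apply: sumr_ge0 => t _; case: (hd t).
rewrite sum_row (eq_bigr (fun j => H%:R^-1 * \sum_(t < H) (row_of mu0 *m Pmat p pi ^+ t) 0 j)); last by move=> j _; rewrite mxE summxE.
rewrite -mulr_sumr exchange_big /=.
under eq_bigr do rewrite (proj2 (hd _)).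
rewrite sumr_const card_ord -[_ *+ H]mulr_natl mulr1 mulVf //.
by rewrite pnatr_eq0 -lt0n.
Qed.
End Occ.

Section Mix.
Variables (R : realFieldType) (X : finType) (I : eqType).

Definition mix (r : seq I) (a : I -> R) (mu : I -> {ffun X -> R}) : {ffun X -> R} :=
  [ffun x => \sum_(i <- r) a i * mu i x].

Lemma mix_dist r a mu : (forall i, 0 <= a i) -> \sum_(i <- r) a i = 1 ->
  (forall i, is_dist (mu i)) -> is_dist (mix r a mu).
Proof.
move=> a0 a1 hmu; split.
  move=> x; rewrite ffunE; apply: sumr_ge0 => i _; apply: mulr_ge0 => //.
  by case: (hmu i).
under eq_bigr do rewrite ffunE.
rewrite exchange_big /= -a1; apply: eq_bigr => i _.
by rewrite -mulr_sumr; case: (hmu i) => _ ->; rewrite mulr1.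
Qed.

Lemma mix_aff (f : {ffun X -> R} -> R) (hf : affine_on_simplex f)
  (mu : I -> {ffun X -> R}) (hmu : forall i, is_dist (mu i)) :
  forall r a, (forall i, 0 <= a i) -> \sum_(i <- r) a i = 1 ->
  f (mix r a mu) = \sum_(i <- r) a i * f (mu i).
Proof.
elim=> [|i r IH] a a0 a1.
  by move: a1; rewrite big_nil => /eqP; rewrite eq_sym oner_eq0.
rewrite big_cons in a1.
have s0 : 0 <= \sum_(j <- r) a j by apply: sumr_ge0.
have [t1|t1] := eqVneq (a i) 1.
  have : \sum_(j <- r) a j == 0 by apply/eqP; move: a1; rewrite t1; lra.
  rewrite psumr_eq0 // => /allP hz.
  have -> : mix (i :: r) a mu = mu i.
    apply/ffunP => x; rewrite ffunE big_cons t1 mul1r big1_seq ?addr0 //.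
    by move=> j /andP[_ /hz /eqP ->]; rewrite mul0r.
  rewrite big_cons t1 mul1r big1_seq ?addr0 //.
  by move=> j /andP[_ /hz /eqP ->]; rewrite mul0r.
have ht : 1 - a i != 0 by rewrite subr_eq0 eq_sym.
have ht0 : 0 < 1 - a i.
  rewrite lt_neqAle eq_sym ht /=; lra.
set a' := fun j => a j / (1 - a i).
have a0' : forall j, 0 <= a' j.
  by move=> j; apply: divr_ge0 => //; apply: ltW.
have a1' : \sum_(j <- r) a' j = 1.
  rewrite /a' -mulr_suml.
  have -> : \sum_(j <- r) a j = 1 - a i by lra.
  by rewrite divff.
have emix : mix (i :: r) a mu = [ffun x => a i * mu i x + (1 - a i) * mix r a' mu x].
  apply/ffunP => x; rewrite !ffunE big_cons mulr_sumr; congr (_ + _).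
  apply: eq_bigr => j _; rewrite /a'; field; exact: ht.
have hi : 0 <= a i <= 1 by apply/andP; split; [exact: a0 | lra].
rewrite emix (hf _ _ (hmu i) (mix_dist a0' a1' hmu) _ hi) (IH _ a0' a1') big_cons.
congr (_ + _); rewrite mulr_sumr; apply: eq_bigr => j _; rewrite /a'; field; exact: ht.
Qed.
End Mix.

Theorem mainTheorem8 (R : realFieldType) (X A : finType)
  (r : X -> A -> {ffun X -> R} -> R) (p : X -> A -> {ffun X -> R})
  (mu0 : {ffun X -> R}) (m : occ_model R)
  (Hp : is_kernel p) (Hmu0 : is_dist mu0) (Hm : valid_occ_model m)
  (n : nat) (Pi : 'I_n -> policy R X A)
  (HPi : forall i, is_policy (Pi i)) (HPi_inj : injective Pi)
  (Haff : mu_diff_affine (Jv m p mu0 r))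
  (nu : 'cV[R]_n) (Hnu : is_dist [ffun i => nu i 0]) :
  let J := Jv m p mu0 r in
  let M : 'M[R]_n := \matrix_(i, j) J (Pi i) (occupancy m p mu0 (Pi j)) in
  (forall k : 'I_n, (M *m nu) k 0 <= (nu^T *m M *m nu) 0 0) ->
  let mu_nu : {ffun X -> R} := [ffun x => \sum_j nu j 0 * occupancy m p mu0 (Pi j) x] in
  forall k : 'I_n,
    J (Pi k) mu_nu - \sum_i nu i 0 * J (Pi i) mu_nu <= 0.
Proof.
move=> J M HN mu_nu k.
set occ := fun j => occupancy m p mu0 (Pi j).
have Me : forall i j, M i j = J (Pi i) (occ j) by move=> i j; rewrite /M mxE.
clearbody M.
have hocc : forall j, is_dist (occ j) by move=> j; apply: occ_dist.
have a0 : forall j, 0 <= nu j 0 by move=> j; case: Hnu => h _; move: (h j); rewrite ffunE.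
have a1 : \sum_j nu j 0 = 1.
  by case: Hnu => _ <-; apply: eq_bigr => j _; rewrite ffunE.
have emu : mu_nu = mix (index_enum 'I_n) (fun j => nu j 0) occ by [].
have E1 : J (Pi k) mu_nu - \sum_i nu i 0 * J (Pi i) mu_nu =
          \sum_i nu i 0 * (J (Pi k) mu_nu - J (Pi i) mu_nu).
  by rewrite (eq_bigr _ (fun i _ => mulrBr _ _ _)) sumrB -mulr_suml a1 mul1r.
have E2 : forall i, J (Pi k) mu_nu - J (Pi i) mu_nu =
   \sum_j nu j 0 * (J (Pi k) (occ j) - J (Pi i) (occ j)).
  move=> i; rewrite emu.
  exact: (mix_aff (f := fun mu => J (Pi k) mu - J (Pi i) mu) (Haff _ _ (HPi k) (HPi i)) hocc a0 a1).
rewrite E1 (eq_bigr _ (fun i _ => congr1 (fun z => nu i 0 * z) (E2 i))).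
have E3 : \sum_i nu i 0 * \sum_j nu j 0 * (J (Pi k) (occ j) - J (Pi i) (occ j)) =
   (M *m nu) k 0 - (nu^T *m M *m nu) 0 0.
  rewrite !mxE -sumrB.
  under eq_bigr do rewrite mulr_sumr.
  rewrite exchange_big /=; apply: eq_bigr => j _.
  rewrite mxE Me.
  under [in RHS]eq_bigr => i _ do rewrite mxE Me.
  rewrite [in RHS]mulr_suml.
  transitivity (\sum_i (nu i 0 * (nu j 0 * J (Pi k) (occ j)) - nu i 0 * J (Pi i) (occ j) * nu j 0)).
    by apply: eq_bigr => i _; rewrite /occ; ring.
  rewrite sumrB [X in _ = _ - X]mulr_suml; congr (_ - _).
  transitivity ((\sum_i nu i 0) * (nu j 0 * J (Pi k) (occ j))); first by rewrite [RHS]mulr_suml.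
  by rewrite a1 mul1r mulrC -mulr_suml.
rewrite E3 subr_le0; exact: HN.
Qed.
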